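(* Let $k\geq 2$ be an integer, $n=rk$ with $r>2$ an integer, and $e=\lceil r/2\rceil-1$. Let $\mathcal{C}_i=\{\alpha U_i\mid \alpha\in\mathbb{F}_{q^n}^*\}$. Then the subspace code $\mathcal{C}=\bigcup_{i=1}^{e(q-1)(q^k-1)}\mathcal{C}_i$ is a cyclic constant dimension subspace code with cardinality $e(q^k-1)(q^n-1)$ and minimum distance $2k-2$.
   Context: $q$ is a prime power, $\mathbb{F}_{q^n}$ is the extension of degree $n$ of $\mathbb{F}_q$, viewed as an $n$-dimensional $\mathbb{F}_q$-vector space. The subspace distance is $d(U,V)=\dim U+\dim V-2\dim(U\cap V)$; a constant dimension subspace code is a set of $k$-dimensional $\mathbb{F}_q$-subspaces of $\mathbb{F}_{q^n}$, and it is cyclic if it is a union of orbits $\{\alpha U\mid \alpha\in\mathbb{F}_{q^n}^*\}$. Let $\xi$ be a primitive element of $\mathbb{F}_{q^k}$ and $G=\mathbb{F}_{q^k}^*/\langle\xi^{q-1}\rangle$, a cyclic group of order $q-1$ (elements of $G$ are used via fixed coset representatives in $\mathbb{F}_{q^k}^*$). Let $\gamma$ be a root of an irreducible polynomial of degree $r$ over $\mathbb{F}_{q^k}$ (so $1,\gamma,\dots,\gamma^{r-1}$ are linearly independent over $\mathbb{F}_{q^k}$ and $\mathbb{F}_{q^k}(\gamma)=\mathbb{F}_{q^n}$). The $e(q-1)(q^k-1)$ subspaces $U_i=\{u+(\tau_i u^q+u)\delta_i\gamma^{l_i}\mid u\in\mathbb{F}_{q^k}\}$, $1\le i\le e(q-1)(q^k-1)$,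 are indexed by all triples $(\tau_i,\delta_i,l_i)$ with $\tau_i\in G$, $\delta_i\in\mathbb{F}_{q^k}^*$, $1\leq l_i\leq e$. *)

(* Defs.v *)
From HB Require Import structures.
From mathcomp Require Import all_boot all_order all_algebra all_field.
Set Implicit Arguments. Unset Strict Implicit. Unset Printing Implicit Defensive.
Import GRing.Theory.
Local Open Scope ring_scope.

Definition subspace_dist (F : fieldType) (vT : vectType F) (U V : {vspace vT}) : nat :=
  (\dim U + \dim V - 2 * \dim (U :&: V))%N.

Definition is_scaled_U (F : fieldType) (L : fieldExtType F) (q : nat)
    (K : {subfield L}) (alpha tau delta gamma : L) (l : nat) (V : {vspace L}) : Prop :=
  forall x : L, x \in V <->
    exists2 u, u \in K & x = alpha * (u + (tau * u ^+ q + u) * delta * gamma ^+ l).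

(* Membership in the code C = union over (tau_i, delta, l) of the orbits
   C_i = { alpha U_i | alpha in F_{q^n}^* }. *)
Definition in_code (F : fieldType) (L : fieldExtType F) (q e : nat)
    (K : {subfield L}) (T : nat -> L) (gamma : L) (V : {vspace L}) : Prop :=
  exists alpha : L, alpha != 0 /\
  exists i : nat, (i < q - 1)%N /\
  exists delta : L, [/\ delta \in K, delta != 0 &
  exists l : nat, [/\ (1 <= l)%N, (l <= e)%N &
     is_scaled_U q K alpha (T i) delta gamma l V]].

(* Main.v *)
Require Import Defs.
From HB Require Import structures.
From mathcomp Require Import all_boot all_order all_algebra all_field.
Import GRing.Theory.
Local Open Scope ring_scope.
From mathcomp Require Import zify ring.
Set Implicit Arguments. Unset Strict Implicit. Unset Printing Implicit Defensive.
Section Frob.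
Variables (F : finFieldType) (L : fieldExtType F).
Local Notation q := #|F|.
Lemma frobB : zmod_morphism (fun x : L => x ^+ q).
Proof.
move=> x y /=.
have [p _ pcharFp] := finPcharP F.
rewrite (card_pprimeChar pcharFp).
move: (logn _ _) => m.
have pL : p \in [pchar L] by rewrite (pchar_lalg L).
Timeout 20 elim: m => // m IHm; rewrite expnSr !exprM {}IHm.
Timeout 20 by rewrite -(pFrobenius_autE pL) rmorphB.
Qed.

Lemma frob_alg (c : F) : (c%:A : L) ^+ q = c%:A.
Proof. by rewrite -in_algE -(rmorphXn (in_alg L)) expf_card. Qed.

Lemma frobZ (c : F) (x : L) : (c *: x) ^+ q = c *: x ^+ q.
Proof. by rewrite -mulr_algl exprMn frob_alg mulr_algl. Qed.

Lemma mem1vP (x : L) : reflect (x ^+ q = x) (x \in (1%VS : {vspace L})).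
Proof.
Timeout 20 rewrite (Fermat's_little_theorem 1%AS) /= dimv1 expn1; exact: eqP.
Qed.
Lemma q_gt0 : (0 < q)%N.
Proof. by apply/card_gt0P; exists 0. Qed.

Lemma frob0 : (0 : L) ^+ q = 0.
Proof. by rewrite expr0n gtn_eqF // q_gt0. Qed.

Lemma frobN (x : L) : (- x) ^+ q = - x ^+ q.
Proof. by rewrite -[- x]sub0r frobB frob0 sub0r. Qed.

Lemma frobD (x y : L) : (x + y) ^+ q = x ^+ q + y ^+ q.
Proof. by rewrite -{1}[y]opprK frobB frobN opprK. Qed.
End Frob.

Section Indep.
Variables (F : fieldType) (L : fieldExtType F) (K : {subfield L}) (gamma : L) (r : nat).
Hypothesis szmin : size (minPoly K gamma) = r.+1.

Lemma indep_poly (p : {poly L}) : p \is a polyOver K -> (size p <= r)%N -> p.[gamma] = 0 -> p = 0.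
Proof.
move=> pK szp rt; apply/eqP; apply/negPn/negP => p0.
have := dvdp_leq p0 (minPoly_dvdp pK (introT rootP rt)).
by rewrite szmin ltnNge szp.
Qed.

Lemma indep4 (c0 c1 c2 c3 : L) l l' :
  c0 \in K -> c1 \in K -> c2 \in K -> c3 \in K ->
  (0 < l)%N -> (0 < l')%N -> (l + l' < r)%N ->
  c0 + c1 * gamma ^+ l + c2 * gamma ^+ l' + c3 * gamma ^+ (l + l') = 0 ->
  [/\ c0 = 0, c3 = 0 & c1 + (l == l')%:R * c2 = 0].
Proof.
move=> K0 K1 K2 K3 l0 l'0 ll' E.
pose P := c0%:P + c1%:P * 'X^l + c2%:P * 'X^l' + c3%:P * 'X^(l + l').
have cP j : P`_j = c0 * (j == 0%N)%:R + c1 * (j == l)%:R + c2 * (j == l')%:R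
                   + c3 * (j == l + l')%N%:R.
  by rewrite /P !coefD !coefCM !coefXn coefC; case: (j == 0%N); rewrite ?mulr1 ?mulr0.
have P0 : P = 0.
  apply: indep_poly.
  - by rewrite /P !rpredD ?rpredM ?polyOverC ?polyOverXn.
  - apply/leq_sizeP => j hj; rewrite cP.
    have -> : (j == 0%N) = false by apply/eqP; lia.
    have -> : (j == l) = false by apply/eqP; lia.
    have -> : (j == l') = false by apply/eqP; lia.
    have -> : (j == (l + l')%N) = false by apply/eqP; lia.
    by rewrite !mulr0 !addr0.
  - by rewrite /P !hornerE.
have := cP 0%N; have := cP l; have := cP (l + l')%N; rewrite P0 !coef0.
rewrite !eqxx.
have -> : (0 == l) = false by apply/eqP; lia.
have -> : (0 == l') = false by apply/eqP; lia.
have -> : (0 == l + l')%N = false by apply/eqP; lia.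
have -> : (l + l' == 0)%N = false by apply/eqP; lia.
have -> : (l + l' == l)%N = false by apply/eqP; lia.
have -> : (l + l' == l')%N = false by apply/eqP; lia.
have -> : (l == 0)%N = false by apply/eqP; lia.
have -> : (l == l + l')%N = false by apply/eqP; lia.
rewrite !mulr0 !mulr1 !add0r !addr0 => h3 h1 h0.
by split; [rewrite -h0 | rewrite -h3 | rewrite mulrC -h1].
Qed.
End Indep.


Definition gm (F : finFieldType) (L : fieldExtType F) (gamma tau delta : L) (l : nat) (u : L) : L :=
  u + (tau * u ^+ #|F| + u) * delta * gamma ^+ l.
Definition gfun (F : finFieldType) (L : fieldExtType F) (gamma alpha tau delta : L) (l : nat) (u : L) : L :=
  alpha * gm gamma tau delta l u.

Lemma gfun_lin (F : finFieldType) (L : fieldExtType F) (gamma alpha tau delta : L) (l : nat) :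
  linear (gfun gamma alpha tau delta l).
Proof.
move=> c u v; rewrite /gfun /gm frobD frobZ.
have hs : forall x : L, c *: x = c%:A * x by move=> x; rewrite mulr_algl.
move: (c%:A) hs => a hs; rewrite !hs; ring.
Qed.

HB.instance Definition _ (F : finFieldType) (L : fieldExtType F) (gamma alpha tau delta : L) (l : nat) :=
  GRing.isLinear.Build F L L *:%R (gfun gamma alpha tau delta l) (gfun_lin gamma alpha tau delta l).

Definition Vt (F : finFieldType) (L : fieldExtType F) (K : {subfield L}) (gamma alpha tau delta : L) (l : nat) : {vspace L} :=
  (linfun (gfun gamma alpha tau delta l) @: K)%VS.

Lemma memVt (F : finFieldType) (L : fieldExtType F) (K : {subfield L}) (gamma alpha tau delta : L) (l : nat) x :
  reflect (exists2 u, u \in K & x = gfun gamma alpha tau delta l u) (x \in Vt K gamma alpha tau delta l).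
Proof.
by apply: (iffP memv_imgP) => -[u uK ->]; exists u; rewrite ?lfunE.
Qed.


Section Key.
Variables (F : finFieldType) (L : fieldExtType F) (K : {subfield L}) (gamma : L) (r : nat).
Hypothesis szmin : size (minPoly K gamma) = r.+1.
Local Notation q := #|F|.

Lemma gm0 tau delta l : gm gamma tau delta l 0 = 0.
Proof. by rewrite /gm frob0 !(mulr0, addr0, mul0r). Qed.

Lemma gm_eq0 tau delta l u : tau \in K -> delta \in K -> u \in K ->
  (0 < l)%N -> (l + l < r)%N -> gm gamma tau delta l u = 0 -> u = 0.
Proof.
move=> tK dK uK l0 lr E.
have [] := indep4 szmin (c0 := u) (c1 := (tau * u ^+ q + u) * delta) (c2 := 0) (c3 := 0)
  uK _ (rpred0 _) (rpred0 _) l0 l0 lr.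
- by rewrite rpredM ?rpredD ?rpredM ?rpredX.
- rewrite !mul0r !addr0. exact: E.
by [].
Qed.

Lemma gfunZ alpha tau delta l (c : F) u :
  gfun gamma alpha tau delta l (c *: u) = c *: gfun gamma alpha tau delta l u.
Proof. by rewrite linearZ. Qed.


Lemma gmZ tau delta l (c : F) u :
  gm gamma tau delta l (c *: u) = c *: gm gamma tau delta l u.
Proof.
rewrite /gm frobZ.
have hs : forall x : L, c *: x = c%:A * x by move=> x; rewrite mulr_algl.
move: (c%:A) hs => a hs; rewrite !hs; ring.
Qed.

Lemma key alpha beta tau tau' delta delta' l l' w1 w2 :
  alpha != 0 -> beta != 0 -> tau \in K -> tau != 0 -> tau' \in K -> tau' != 0 ->
  delta \in K -> delta != 0 -> delta' \in K -> delta' != 0 ->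
  (0 < l)%N -> (0 < l')%N -> (l + l < r)%N -> (l' + l' < r)%N -> (l + l' < r)%N ->
  (forall lam, lam \in K -> lam != 0 -> tau * lam ^+ q = lam * tau' -> tau = tau') ->
  w1 \in Vt K gamma alpha tau delta l -> w1 \in Vt K gamma beta tau' delta' l' ->
  w2 \in Vt K gamma alpha tau delta l -> w2 \in Vt K gamma beta tau' delta' l' ->
  w1 != 0 -> w2 \notin <[w1]>%VS ->
  [/\ tau = tau', delta = delta', l = l' & exists c : F, beta = c%:A * alpha].
Proof.
move=> a0 b0 tK t0 t'K t'0 dK d0 d'K d'0 l0 l'0 ll l'l' ll' Htau.
move=> /memVt[u1 u1K ->] /memVt[v1 v1K E1] /memVt[u2 u2K ->] /memVt[v2 v2K E2] w10 w2n.
have w20 : gfun gamma alpha tau delta l u2 != 0.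
  by apply: contraNneq w2n => ->; rewrite mem0v.
have u10 : u1 != 0 by apply: contraNneq w10 => ->; rewrite /gfun gm0 mulr0.
have u20 : u2 != 0 by apply: contraNneq w20 => ->; rewrite /gfun gm0 mulr0.
have v10 : v1 != 0 by apply: contraNneq w10 => h; rewrite E1 h /gfun gm0 mulr0.
have v20 : v2 != 0 by apply: contraNneq w20 => h; rewrite E2 h /gfun gm0 mulr0.
move: E1 E2; rewrite /gfun => E1 E2.
have hX : gm gamma tau delta l u1 * gm gamma tau' delta' l' v2
        - gm gamma tau delta l u2 * gm gamma tau' delta' l' v1 = 0.
  apply: (mulfI (mulf_neq0 a0 b0)); rewrite mulr0.
  transitivity ((alpha * gm gamma tau delta l u1) * (beta * gm gamma tau' delta' l' v2)
     - (beta * gm gamma tau' delta' l' v1) * (alpha * gm gamma tau delta l u2)); first by ring.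
  by rewrite E1 E2; ring.
move: hX; rewrite /gm.
set a1 := tau * u1 ^+ q + u1; set a2 := tau * u2 ^+ q + u2.
set b1 := tau' * v1 ^+ q + v1; set b2 := tau' * v2 ^+ q + v2.
move=> hX.
have aK x : x \in K -> tau * x ^+ q + x \in K by move=> xK; rewrite rpredD ?rpredM ?rpredX.
have a'K x : x \in K -> tau' * x ^+ q + x \in K by move=> xK; rewrite rpredD ?rpredM ?rpredX.
have hE : (u1 * v2 - u2 * v1) + (a1 * delta * v2 - a2 * delta * v1) * gamma ^+ l
   + (u1 * (b2 * delta') - u2 * (b1 * delta')) * gamma ^+ l'
   + (a1 * delta * (b2 * delta') - a2 * delta * (b1 * delta')) * gamma ^+ (l + l') = 0.
  by rewrite -hX exprD; ring.
have [h0 h3 h1] := indep4 szmin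
  (c0 := u1 * v2 - u2 * v1) (c1 := a1 * delta * v2 - a2 * delta * v1)
  (c2 := u1 * (b2 * delta') - u2 * (b1 * delta'))
  (c3 := a1 * delta * (b2 * delta') - a2 * delta * (b1 * delta'))
  (rpredB (rpredM u1K v2K) (rpredM u2K v1K))
  (rpredB (rpredM (rpredM (aK _ u1K) dK) v2K) (rpredM (rpredM (aK _ u2K) dK) v1K))
  (rpredB (rpredM u1K (rpredM (a'K _ v2K) d'K)) (rpredM u2K (rpredM (a'K _ v1K) d'K)))
  (rpredB (rpredM (rpredM (aK _ u1K) dK) (rpredM (a'K _ v2K) d'K))
          (rpredM (rpredM (aK _ u2K) dK) (rpredM (a'K _ v1K) d'K)))
  l0 l'0 ll' hE.
have [lam [lamK lam0 hu1 hu2]] :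
    exists lam, [/\ lam \in K, lam != 0, u1 = lam * v1 & u2 = lam * v2].
  exists (u1 / v1); split.
  - by rewrite rpred_div.
  - by rewrite mulf_neq0 ?invr_eq0.
  - by rewrite divfK.
  - apply: (mulIf v10); move/eqP: h0; rewrite subr_eq0 => /eqP h0'.
    by rewrite -h0'; field.
subst u1 u2.
have D0 : v1 ^+ q * v2 - v1 * v2 ^+ q != 0.
  apply/negP => /eqP HD; move/negP: w2n; apply.
  have : v2 / v1 \in (1%VS : {vspace L}).
    apply/mem1vP; rewrite exprMn exprVn; apply/eqP.
    rewrite eqr_div ?expf_neq0 //; apply/eqP.
    by move/eqP: HD; rewrite subr_eq0 => /eqP HD; rewrite mulrC -HD mulrC.
  case/vlineP => c hc.
  have hv2 : v2 = c *: v1 by rewrite -[v2](divfK v10) hc -scalerAl mul1r.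
  by apply/vlineP; exists c; rewrite hv2 -scalerAr gfunZ.
have htl : tau * lam ^+ q = lam * tau'.
  have : delta * delta' * (tau * lam ^+ q - lam * tau') * (v1 ^+ q * v2 - v1 * v2 ^+ q) = 0.
    by rewrite -h3 /a1 /a2 /b1 /b2 !exprMn; ring.
  move/eqP; rewrite !mulf_eq0 (negbTE d0) (negbTE d'0) (negbTE D0) /= orbF.
  by rewrite subr_eq0 => /eqP.
have ett := Htau lam lamK lam0 htl; subst tau'.
have hlq : lam ^+ q = lam by apply: (mulfI t0); rewrite htl mulrC.
have [c hc] : exists c : F, lam = c%:A.
  have /vlineP[c hc] : lam \in (1%VS : {vspace L}) by apply/mem1vP.
  by exists c.
set D := v1 ^+ q * v2 - v1 * v2 ^+ q in D0 h1 h3.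
have hc1 : a1 * delta * v2 - a2 * delta * v1 = lam * delta * tau * D.
  by rewrite /a1 /a2 /D !exprMn hlq; ring.
have hc2 : lam * v1 * (b2 * delta') - lam * v2 * (b1 * delta') = - (lam * delta' * tau * D).
  by rewrite /b1 /b2 /D; ring.
rewrite hc1 hc2 in h1.
have gl v : gm gamma tau delta l (lam * v) = lam * gm gamma tau delta l v.
  by rewrite /gm exprMn hlq; ring.
case: (eqVneq l l') => hl; last first.
  rewrite (negbTE hl) mul0r addr0 in h1.
  by move/eqP: h1; rewrite !mulf_eq0 (negbTE lam0) (negbTE d0) (negbTE t0) (negbTE D0).
subst l'; rewrite eqxx mul1r in h1.
have hdd : delta = delta'.
  have : lam * tau * D * (delta - delta') = 0 by rewrite -h1; ring.
  move/eqP; rewrite !mulf_eq0 (negbTE lam0) (negbTE t0) (negbTE D0) /= subr_eq0.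
  by move/eqP.
subst delta'.
have gv10 : gm gamma tau delta l v1 != 0.
  by apply: contraNneq v10 => h; apply/eqP; exact: (gm_eq0 tK dK v1K l0 ll h).
split => //; exists c; rewrite -hc.
apply: (mulIf gv10); rewrite -E1 gl; ring.
Qed.

End Key.


Lemma count_fibers (T1 T2 : eqType) (g : T1 -> T2) (X : seq T1) m :
  (forall x, x \in X -> count (fun y => g y == g x) X = m) ->
  size X = (size (undup (map g X)) * m)%N.
Proof.
move=> hm.
have gen : forall U : seq T2, uniq U ->
    count (fun y => g y \in U) X = \sum_(v <- U) count (fun y => g y == v) X.
  move=> U uU; elim: X {hm} => [|x X IH] /=; first by rewrite big1.
  rewrite IH big_split /=; congr (_ + _)%N.
  rewrite -(count_uniq_mem (g x) uU) -sum1_count big_mkcond /=.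
  by apply: eq_bigr => v _; rewrite eq_sym; case: (_ == _).
have := gen _ (undup_uniq (map g X)).
have -> : count (fun y => g y \in undup (map g X)) X = size X.
  rewrite -[RHS]count_predT; apply: eq_in_count => y yX.
  by rewrite mem_undup map_f.
move=> ->; rewrite big_seq (eq_bigr (fun _ => m)).
  by rewrite -big_seq big_const_seq count_predT iter_addn_0 mulnC.
move=> v; rewrite mem_undup => /mapP[x xX ->]; exact: hm.
Qed.

Lemma exists_notin (F : fieldType) (vT : vectType F) (U W : {vspace vT}) :
  (\dim W < \dim U)%N -> exists2 w, w \in U & w \notin W.
Proof.
move=> hU.
have [hall|] := boolP (all (fun w => w \in W) (vbasis U)).
  have : (U <= W)%VS.
    rewrite -{1}(span_basis (vbasisP U)); apply/span_subvP => w wb.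
    exact: (allP hall w wb).
  by move/dimvS; lia.
case/allPn => w2 wb w2n; exists w2 => //; exact: vbasis_mem.
Qed.

Lemma two_indep (F : fieldType) (vT : vectType F) (U : {vspace vT}) :
  (1 < \dim U)%N -> exists w1, exists w2,
    [/\ w1 \in U, w2 \in U, w1 != 0 & w2 \notin <[w1]>%VS].
Proof.
move=> hU.
have U0 : U != 0%VS by apply: contraTneq hU => ->; rewrite dimv0.
exists (vpick U).
have [hall|] := boolP (all (fun w => w \in <[vpick U]>%VS) (vbasis U)).
  have : (U <= <[vpick U]>)%VS.
    rewrite -{1}(span_basis (vbasisP U)); apply/span_subvP => w wb.
    exact: (allP hall w wb).
  by move/dimvS; rewrite dim_vline; case: (_ != 0) => /=; lia.
case/allPn => w2 wb w2n; exists w2; split => //.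
- exact: memv_pick.
- exact: vbasis_mem.
- by rewrite vpick0.
Qed.


Section Main.
Variables (F : finFieldType) (L : fieldExtType F) (k r : nat)
  (K : {subfield L}) (xi gamma : L) (tau : nat -> L).
Local Notation q := #|F|.
Local Notation n := (r * k)%N.
Local Notation e := ((r.+1)./2 - 1)%N.
Hypotheses (hk : (2 <= k)%N) (hr : (2 < r)%N) (dimL : \dim {:L} = n) (dimK : \dim K = k)
  (xiK : xi \in K) (xiP : (q ^ k - 1)%N.-primitive_root xi)
  (tauK : forall i, (i < q - 1)%N -> tau i \in K /\ tau i != 0)
  (tauI : forall i j m, (i < q - 1)%N -> (j < q - 1)%N ->
     tau i = tau j * xi ^+ ((q - 1) * m) -> i = j)
  (szmin : size (minPoly K gamma) = r.+1).

Lemma e_bound : (e + e < r)%N.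
Proof. rewrite -divn2; lia. Qed.

Lemma e_pos : (0 < e)%N.
Proof. rewrite -divn2; lia. Qed.

Lemma coset i i' lam : (i < q - 1)%N -> (i' < q - 1)%N -> lam \in K -> lam != 0 ->
  tau i * lam ^+ q = lam * tau i' -> i = i'.
Proof.
move=> hi hi' lamK lam0 htl.
have lk : lam ^+ (q ^ k - 1) = 1.
  have := Fermat's_little_theorem K lam; rewrite lamK dimK => /esym/eqP h.
  have q1 : (0 < q ^ k)%N by rewrite expn_gt0 q_gt0.
  apply: (mulIf lam0); rewrite mul1r -exprSr subn1 prednK //.
have [j hj] := prim_rootP xiP lk.
have hq : lam ^+ q = lam * lam ^+ (q - 1) by rewrite -exprS subn1 prednK // q_gt0.
apply/esym/(tauI (m := j)) => //.
apply: (mulfI lam0); rewrite -htl mulnC exprM -hj hq; ring.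
Qed.


Lemma scaled_Vt a t d l V : is_scaled_U q K a t d gamma l V -> V = Vt K gamma a t d l.
Proof.
move=> h; apply/vspaceP => x; apply/idP/idP => [/h hx|/memVt hx].
  by apply/memVt.
by apply/h.
Qed.

Lemma Vt_scaled a t d l : is_scaled_U q K a t d gamma l (Vt K gamma a t d l).
Proof. by move=> x; split => [/memVt|hx]; last apply/memVt. Qed.

Lemma Vt_scale (c : F) a t d l : c != 0 ->
  Vt K gamma (c%:A * a) t d l = Vt K gamma a t d l.
Proof.
move=> c0; apply/vspaceP => x; apply/memVt/memVt => -[u uK ->].
  exists (c *: u); first by rewrite memvZ.
  by rewrite /gfun gmZ -scalerAr mulr_algl scalerAl.
exists (c^-1 *: u); first by rewrite memvZ.
by rewrite /gfun gmZ mulr_algl -scalerAl -scalerAr scalerA mulfV // scale1r.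
Qed.

Lemma Vt_dim a t d l : a != 0 -> t \in K -> d \in K -> (0 < l)%N -> (l + l < r)%N ->
  \dim (Vt K gamma a t d l) = k.
Proof.
move=> a0 tK dK l0 lr; rewrite /Vt limg_dim_eq ?dimK //.
apply/eqP; rewrite -subv0; apply/subvP => x /memv_capP[xK].
rewrite memv_ker lfunE /= /gfun mulf_eq0 (negbTE a0) /= => /eqP h.
by rewrite memv0 (gm_eq0 szmin tK dK xK l0 lr h).
Qed.

Lemma bnds (l l' E r0 : nat) : (0 < l)%N -> (l <= E)%N -> (0 < l')%N -> (l' <= E)%N -> (E + E < r0)%N ->
  [/\ (l + l < r0)%N, (l' + l' < r0)%N & (l + l' < r0)%N].
Proof. move=> *; split; lia. Qed.

Definition valid (a : L) (i : nat) (d : L) (l : nat) := [/\ a != 0, (i < q - 1)%N, d \in K, d != 0 & (0 < l <= e)%N].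

Lemma Vt_eq_inv a i d l b j d' l' : valid a i d l -> valid b j d' l' ->
  (1 < \dim (Vt K gamma a (tau i) d l :&: Vt K gamma b (tau j) d' l'))%N ->
  [/\ i = j, d = d', l = l' & exists c : F, b = c%:A * a].
Proof.
move=> [a0 hi dK d0 hl] [b0 hj d'K d'0 hl'] /two_indep[w1 [w2 [/memv_capP[w1U w1V] /memv_capP[w2U w2V] w10 w2n]]].
have [tK t0] := tauK hi; have [t'K t'0] := tauK hj.
have eb := e_bound.
move: hl hl' eb; move: (e) => E /andP[hl1 hl2] /andP[hl1' hl2'] eb.
have [] := key szmin a0 b0 tK t0 t'K t'0 dK d0 d'K d'0 (l := l) (l' := l') _ _ _ _ _ _ w1U w1V w2U w2V w10 w2n.
- by [].
- by [].
- by case: (bnds hl1 hl2 hl1' hl2' eb).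
- by case: (bnds hl1 hl2 hl1' hl2' eb).
- by case: (bnds hl1 hl2 hl1' hl2' eb).
- by move=> lam lamK lam0 /(coset hi hj lamK lam0) ->.
move=> ett -> -> hc; split => //.
by apply: (tauI (m := 0)) => //; rewrite muln0 expr0 mulr1.
Qed.

Lemma code_iff V : in_code q e K tau gamma V <->
  exists a i d l, valid a i d l /\ V = Vt K gamma a (tau i) d l.
Proof.
split.
  move=> [a [a0 [i [hi [d [dK d0 [l [l1 le hs]]]]]]]].
  by exists a, i, d, l; split; [split => //; apply/andP | exact: scaled_Vt].
move=> [a [i [d [l [[a0 hi dK d0 hl] ->]]]]].
exists a; split => //; exists i; split => //; exists d; split => //.
case/andP: hl => l1 le.
by exists l; split; [ | | exact: Vt_scaled].
Qed.

Lemma valid_bnds a i d l : valid a i d l -> [/\ (0 < l)%N & (l + l < r)%N].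
Proof.
case=> _ _ _ _ /andP[l1 l2]; have eb := e_bound; move: l2 eb; move: (e) => E l2 eb.
by case: (bnds l1 l2 l1 l2 eb).
Qed.

Lemma valid_dim a i d l : valid a i d l -> \dim (Vt K gamma a (tau i) d l) = k.
Proof.
move=> v; have [l0 lr] := valid_bnds v; case: v => a0 hi dK _ _.
by apply: Vt_dim => //; case: (tauK hi).
Qed.

Lemma part_dim V : in_code q e K tau gamma V -> \dim V = k.
Proof. by case/code_iff => [a [i [d [l [v ->]]]]]; exact: valid_dim v. Qed.

Lemma part_cyc (V W : {vspace L}) (alpha : L) : in_code q e K tau gamma V -> alpha != 0 ->
  (forall x, x \in W <-> exists2 v, v \in V & x = alpha * v) -> in_code q e K tau gamma W.
Proof.
case/code_iff => [a [i [d [l [[a0 hi dK d0 hl] hV]]]]] al0 hW; apply/code_iff.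
exists (alpha * a), i, d, l; split; first by split; rewrite ?mulf_neq0.
apply/vspaceP => x; apply/idP/idP => [/hW [v vV ->]|/memVt[u uK ->]].
  move: vV; rewrite hV => /memVt[u uK ->]; apply/memVt; exists u => //.
  by rewrite /gfun mulrA.
apply/hW; exists (gfun gamma a (tau i) d l u); first by rewrite hV; apply/memVt; exists u.
by rewrite /gfun mulrA.
Qed.

Lemma cap_le1 a i d l b j d' l' : valid a i d l -> valid b j d' l' ->
  Vt K gamma a (tau i) d l != Vt K gamma b (tau j) d' l' ->
  (\dim (Vt K gamma a (tau i) d l :&: Vt K gamma b (tau j) d' l') <= 1)%N.
Proof.
move=> va vb hne; rewrite leqNgt; apply/negP => h.
have [eij edd ell [c hc]] := Vt_eq_inv va vb h.
move/eqP: hne; apply; subst j d' l'.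
have c0 : c != 0.
  by case: vb => b0 _ _ _ _; apply: contraNneq b0 => c0; rewrite hc c0 scale0r mul0r.
by rewrite hc Vt_scale.
Qed.

Lemma dist_nat (k0 d0 : nat) : (d0 <= 1)%N -> (2 * k0 - 2 <= k0 + k0 - 2 * d0)%N.
Proof. lia. Qed.

Lemma part_dist U V : in_code q e K tau gamma U -> in_code q e K tau gamma V -> U != V ->
  (2 * k - 2 <= subspace_dist U V)%N.
Proof.
case/code_iff => [a [i [d [l [va ->]]]]]; case/code_iff => [b [j [d' [l' [vb ->]]]]] hne.
by rewrite /subspace_dist (valid_dim va) (valid_dim vb); apply: dist_nat; apply: cap_le1.
Qed.

Lemma gmB t d l x y : gm gamma t d l (x - y) = gm gamma t d l x - gm gamma t d l y.
Proof. by rewrite /gm frobD frobN; ring. Qed.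

Lemma q1_gt0 : (0 < q - 1)%N.
Proof. by rewrite subn_gt0 finNzRing_gt1. Qed.

Lemma part_exists : exists U V, [/\ in_code q e K tau gamma U, in_code q e K tau gamma V,
  U != V & subspace_dist U V = (2 * k - 2)%N].
Proof.
have q1 := q1_gt0.
have [t0K t00] := tauK q1.
have K1 : (1 : L) \in K by exact: rpred1.
have [z zK zn] : exists2 z, z \in K & z \notin <[1]>%VS.
  by apply: exists_notin; rewrite dim_vline oner_neq0 dimK.
have r2 : (1 + 1 < r)%N by [].
have ginj u : u \in K -> gm gamma (tau 0) 1 1 u = 0 -> u = 0.
  by move=> uK; apply: (gm_eq0 szmin t0K K1 uK).
have z0 : z != 0 by apply: contraNneq zn => ->; rewrite mem0v.
have g1 : gm gamma (tau 0) 1 1 1 != 0 by apply/eqP => /(ginj _ K1)/eqP; rewrite oner_eq0.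
have gz : gm gamma (tau 0) 1 1 z != 0 by apply: contraNneq z0 => /(ginj _ zK) ->.
pose th := gm gamma (tau 0) 1 1 1 / gm gamma (tau 0) 1 1 z.
have th0 : th != 0 by rewrite /th mulf_neq0 ?invr_eq0.
have ep := e_pos.
have v1 : valid 1 0 1 1 by split => //; rewrite ?oner_neq0 ?ep.
have vt : valid th 0 1 1 by split => //; rewrite ?oner_neq0 ?ep.
have hcap : gm gamma (tau 0) 1 1 1 \in (Vt K gamma 1 (tau 0) 1 1 :&: Vt K gamma th (tau 0) 1 1)%VS.
  apply/memv_capP; split; apply/memVt.
    by exists 1 => //; rewrite /gfun mul1r.
  by exists z => //; rewrite /gfun /th divfK.
have hne : Vt K gamma 1 (tau 0) 1 1 != Vt K gamma th (tau 0) 1 1.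
  apply/eqP => hUV.
  have : (1 < \dim (Vt K gamma 1 (tau 0) 1 1 :&: Vt K gamma th (tau 0) 1 1))%N.
    by rewrite -hUV capvv (valid_dim v1).
  case/(Vt_eq_inv v1 vt) => _ _ _ [c hc].
  have h1 : gm gamma (tau 0) 1 1 1 = gm gamma (tau 0) 1 1 (c *: z).
    by rewrite gmZ -mulr_algl -[c%:A]mulr1 -hc /th divfK.
  have : c *: z - 1 = 0.
    apply: ginj; first by rewrite rpredB ?memvZ.
    by rewrite gmB h1 subrr.
  move/eqP; rewrite subr_eq0 => /eqP hcz.
  have c0 : c != 0 by apply: contra_eq_neq hcz => ->; rewrite scale0r eq_sym oner_neq0.
  move/negP: zn; apply.
  have -> : z = c^-1 *: 1 by rewrite -hcz scalerA mulVf // scale1r.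
  by rewrite memvZ // memv_line.
exists (Vt K gamma 1 (tau 0) 1 1), (Vt K gamma th (tau 0) 1 1); split => //.
- by apply/code_iff; exists 1, 0%N, 1, 1%N.
- by apply/code_iff; exists th, 0%N, 1, 1%N.
have hle := cap_le1 v1 vt hne.
have hge : (1 <= \dim (Vt K gamma 1 (tau 0) 1 1 :&: Vt K gamma th (tau 0) 1 1))%N.
  have sub : (<[gm gamma (tau 0) 1 1 1]> <= (Vt K gamma 1 (tau 0) 1 1 :&: Vt K gamma th (tau 0) 1 1))%VS.
    by rewrite -memvE.
  by have := dimvS sub; rewrite dim_vline g1.
rewrite /subspace_dist (valid_dim v1) (valid_dim vt).
move: hle hge; move: (\dim _) => d hle hge.
have -> : d = 1%N by apply/eqP; rewrite eqn_leq hle hge.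
by rewrite muln1 addnn -mul2n.
Qed.

Local Notation T := (finvect_type L).
Definition Idx := (T * ('I_(q - 1) * (T * 'I_e)))%type.
Definition Gm (x : Idx) : {vspace L} := Vt K gamma x.1 (tau x.2.1) x.2.2.1 (x.2.2.2).+1.
Definition Sset : {set Idx} :=
  setX [set x : T | x != 0] (setX [set: 'I_(q - 1)]
    (setX [set x : T | (x \in K) && (x != 0)] [set: 'I_e])).

Lemma inS x : (x \in Sset) = (x.1 != 0) && ((x.2.2.1 \in K) && (x.2.2.1 != 0)).
Proof. by rewrite !inE /= andbT. Qed.

Lemma validS x : x \in Sset -> valid x.1 x.2.1 x.2.2.1 (x.2.2.2).+1.
Proof. by rewrite inS => /andP[x0 /andP[xK xd0]]; split => //; rewrite ltn_ord. Qed.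

Lemma cardT : #|T| = (q ^ n)%N.
Proof. by have := card_vspace (fullv : {vspace T}); rewrite card_vspacef => ->; rewrite dimL. Qed.

Lemma cardA : #|[set x : T | x != 0]| = (q ^ n - 1)%N.
Proof.
have -> : [set x : T | x != 0] = [set~ 0] by apply/setP => x; rewrite !inE.
by rewrite cardsC1 cardT subn1.
Qed.

Lemma cardB : #|[set x : T | (x \in K) && (x != 0)]| = (q ^ k - 1)%N.
Proof.
have h1 : #|[set x : T | x \in K]| = (q ^ k)%N.
  by rewrite -dimK -(card_vspace (K : {vspace T})); apply: eq_card => x; rewrite inE.
have -> : [set x : T | (x \in K) && (x != 0)] = [set x : T | x \in K] :\ 0.
  by apply/setP => x; rewrite !inE andbC.
by rewrite -h1 (cardsD1 0 [set x : T | x \in K]) !inE rpred0 add1n subn1.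
Qed.

Lemma cardS : #|Sset| = ((q ^ n - 1) * ((q - 1) * ((q ^ k - 1) * e)))%N.
Proof. by rewrite !cardsX cardA cardB !cardsT !card_ord. Qed.

Lemma fiber x : x \in Sset ->
  [set y in Sset | Gm y == Gm x] = (fun c : F => ((c%:A * x.1 : T), x.2)) @: [set~ 0].
Proof.
move=> xS; have vx := validS xS.
apply/setP => y; rewrite in_set; apply/andP/imsetP.
  case=> yS /eqP hG; have vy := validS yS.
  have : (1 < \dim (Gm x :&: Gm y))%N by rewrite hG capvv /Gm (valid_dim vx).
  case/(Vt_eq_inv vx vy) => eij edd ell [c hc].
  have c0 : c != 0.
    by case: vy => y0 _ _ _ _; apply: contraNneq y0 => c0; rewrite hc c0 scale0r mul0r.
  exists c; first by rewrite !inE.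
  move: hc eij edd ell; case: y {yS hG vy} => y1 [yi [yd yl]] /= -> eij edd ell.
  case: x {xS vx} eij edd ell => x1 [xj [xd xl]] /= eij edd ell.
  by congr (_, (_, (_, _))) => //; apply: val_inj => //=; apply/eqP; rewrite -eqSS ell.
case=> c; rewrite in_setC1 => c0 ->; split.
  rewrite inS /= mulf_neq0 //=; last by case: vx.
    by case: vx => _ _ -> -> _.
  by rewrite -in_algE fmorph_eq0.
by rewrite /Gm /= Vt_scale.
Qed.

Lemma fiber_card x : x \in Sset -> #|[set y in Sset | Gm y == Gm x]| = (q - 1)%N.
Proof.
move=> xS; rewrite fiber // card_imset ?cardsC1 ?subn1 //.
move=> c c2 /= [] h; apply: (fmorph_inj (in_alg L)) => /=.
by apply: (mulIf _ h); case: (validS xS).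
Qed.

Lemma count_Gm x : x \in Sset ->
  count (fun y => Gm y == Gm x) (enum Sset) = (q - 1)%N.
Proof.
move=> xS; rewrite -size_filter.
transitivity #|[set y in Sset | Gm y == Gm x]|; last exact: fiber_card.
have /card_uniqP <- := filter_uniq (fun y => Gm y == Gm x) (enum_uniq (mem Sset)).
by apply: eq_card => y; rewrite mem_filter mem_enum !inE andbC.
Qed.

Lemma size_nat (s0 a b c m : nat) : (0 < m)%N ->
  (a * (m * (b * c)) = s0 * m)%N -> s0 = (c * b * a)%N.
Proof.
move=> m0 h; apply/eqP; rewrite -(eqn_pmul2r m0) -h; apply/eqP.
ring.
Qed.

Lemma part_card : exists s : seq {vspace L}, [/\ uniq s,
  (forall V, V \in s <-> in_code q e K tau gamma V) &
  size s = (e * (q ^ k - 1) * (q ^ n - 1))%N].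
Proof.
exists (undup [seq Gm x | x <- enum Sset]); split.
- exact: undup_uniq.
- move=> V; rewrite mem_undup; split.
    case/mapP => x; rewrite mem_enum => xS ->; apply/code_iff.
    by exists x.1, x.2.1, x.2.2.1, (x.2.2.2).+1; split; [exact: validS xS|].
  case/code_iff => [a [i [d [l [[a0 hi dK d0 /andP[l1 le]] ->]]]]].
  have hl : (l.-1 < e)%N by rewrite prednK.
  apply/mapP; exists ((a : T), (Ordinal hi, ((d : T), Ordinal hl))).
    by rewrite mem_enum inS /= a0 dK d0.
  by rewrite /Gm /= prednK.
- have hf : forall x, x \in enum Sset ->
      count (fun y => Gm y == Gm x) (enum Sset) = (q - 1)%N.
    by move=> x; rewrite mem_enum; exact: count_Gm.
  have := count_fibers hf.
  rewrite -cardE cardS; apply: size_nat; exact: q1_gt0.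
Qed.

End Main.


Unset Implicit Arguments.

Theorem lemma3p1
  (F : finFieldType) (L : fieldExtType F) (k r : nat)
  (K : {subfield L}) (xi gamma : L) (tau : nat -> L) :
  let q := #|F| in
  let n := (r * k)%N in
  let e := ((r.+1)./2 - 1)%N in
  (2 <= k)%N -> (2 < r)%N ->
  \dim {:L} = n ->
  \dim K = k ->
  (* xi is a primitive element of F_{q^k} *)
  xi \in K -> (q ^ k - 1)%N.-primitive_root xi ->
  (* tau_0, ..., tau_{q-2} : fixed representatives of the cosets of
     G = F_{q^k}^* / <xi^(q-1)> *)
  (forall i, (i < q - 1)%N -> tau i \in K /\ tau i != 0) ->
  (forall i j m, (i < q - 1)%N -> (j < q - 1)%N ->
     tau i = tau j * xi ^+ ((q - 1) * m) -> i = j) ->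
  (forall x, x \in K -> x != 0 ->
     exists2 i, (i < q - 1)%N & exists m, x = tau i * xi ^+ ((q - 1) * m)) ->
  (* gamma : root of an irreducible polynomial of degree r over F_{q^k},
     generating F_{q^n} over F_{q^k} *)
  size (minPoly K gamma) = r.+1 ->
  <<K; gamma>>%VS = fullv ->
  let C := in_code q e K tau gamma in
  [/\ (* constant dimension k *)
      (forall V, C V -> \dim V = k),
      (* cyclic: closed under multiplication by F_{q^n}^* *)
      (forall (V W : {vspace L}) (alpha : L), C V -> alpha != 0 ->
         (forall x, x \in W <-> exists2 v, v \in V & x = alpha * v) -> C W),
      (* cardinality e (q^k - 1)(q^n - 1) *)
      (exists s : seq {vspace L}, [/\ uniq s, (forall V, V \in s <-> C V) &
         size s = (e * (q ^ k - 1) * (q ^ n - 1))%N]) &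
      (* minimum distance 2k - 2 *)
      (forall U V, C U -> C V -> U != V -> (2 * k - 2 <= subspace_dist U V)%N)
      /\ (exists U V, [/\ C U, C V, U != V & subspace_dist U V = (2 * k - 2)%N])].

Proof.
move=> q n e hk hr dimL dimK xiK xiP tauK tauI tauS szmin genL C.
split.
- by move=> V hV; exact: (part_dim hk hr dimL dimK xiK xiP tauK szmin hV).
- by move=> V W alpha hV a0 hW; exact: (part_cyc hV a0 hW).
- exact: (part_card hk hr dimL dimK xiK xiP tauK tauI szmin).
split.
- by move=> U V hU hV hne; exact: (part_dist hk hr dimL dimK xiK xiP tauK tauI szmin hU hV hne).
- exact: (part_exists hk hr dimL dimK xiK xiP tauK tauI szmin).
Qed.
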